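(* (i) Every invertible linear map $A:\mathcal{F}_p\to\mathcal{F}_c$ or $\mathcal{F}_c\to\mathcal{F}_p$, $f\mapsto fA$, preserves static equilibrium. Every projective duality of a statics problem can be described as the composition of a linear-map equivalence class $A_\sim=\{\lambda A:\lambda\ne0\}$ acting on the forces and an equilibrium preserving congruence of the force system, and every such composition gives a projective duality of the statics problem. (ii) Every invertible linear map $A:\mathcal{E}_p\to\mathcal{E}_c$ or $\mathcal{E}_c\to\mathcal{E}_p$, $e\mapsto eA$, preserves compatibility. Every projective duality of a kinematics problem can be described as the composition of a linear-map equivalence class acting on the velocities and a compatibility preserving congruence of the velocity system, and every such composition gives a projective duality of the kinematics problem.
   Context: Points of the real projective plane $PG(2)$ are classes of nonzero vectors of $\mathbb{R}^3$ up to nonzero scaling ($\vec p\in\mathbb{R}^2$ is $(\vec p,1)$, ideal points are $(\vec u,0)$); lines are also represented by nonzero vectors up to scaling, and $p$ lies on $l$ iff $\langle p,l\rangle=0$. A duality of $PG(2)$ maps points to lines and lines to points preserving incidence; it is given by an invertible $3\times 3$ matrix $A$ up to scaling, with points $p\mapsto$ lines $pA$ and lines $l\mapsto$ points $lA^{-T}$. Mechanical quantities (bodies in the $x,y$ plane): $\mathcal{F}_p$: coplanar force with components $F_x,F_y$ and moment $M_z$ about the origin is $f=(-F_y,F_x,M_z)$, representing its line of action. $\mathcal{F}_c$: force orthogonal to the plane with $z$-component $F_z$ and moments $M_x,M_y$ about the coordinate axes is $f=(-M_y,M_x,F_z)$, representing its point of action. $\mathcal{E}_c$: planar rigid motion with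 origin velocity $(v_x,v_y)$ and angular velocity $\omega_z$ is $e=(-v_y,v_x,\omega_z)$, representing the point of rotation. $\mathcal{E}_p$: motion with $z$-velocity $v_z$ of the origin and angular velocity components $\omega_x,\omega_y$ is $e=(-\omega_y,\omega_x,v_z)$, representing the line of rotation. Static equilibrium of a force system on a body means its vectors sum to $0$. Compatibility conditions have the form $\langle l,e_j-e_k\rangle=0$ (line $l$, in $\mathcal{E}_c$) or $\langle p,e_j-e_k\rangle=0$ (point $p$, in $\mathcal{E}_p$). A congruence of a force (velocity) system $\{f_i\}$ is $\{f_i\}\mapsto\{\psi_if_i\}$ with $\psi_i\neq0$; it is equilibrium (compatibility) preserving for a problem if equilibrium (compatibility) of all (sub)bodies is preserved. A projective duality of a statics (kinematics) problem is a transformation of the mechanical quantities such that points and lines of attack of the forces (velocities) are transformed into lines and points of attack according to one projective duality of $PG(2)$, and the image is in static equilibrium (compatible) if and only if the original is. *)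

(* Defs.v *)
From HB Require Import structures.
From mathcomp Require Import all_boot all_order all_algebra.
From mathcomp Require Import reals.
Set Implicit Arguments. Unset Strict Implicit. Unset Printing Implicit Defensive.
Import Order.TTheory GRing.Theory Num.Theory.
Local Open Scope ring_scope.

(* Elements of PG(2) are represented by row vectors of R^3. *)
Inductive elt_kind := PointK | LineK.
Definition opp_kind (k : elt_kind) := match k with PointK => LineK | LineK => PointK end.

Inductive force_type := Fp | Fc.      (* F_p: line of action; F_c: point of action *)
Inductive vel_type := Ec | Ep.        (* E_c: point of rotation; E_p: line of rotation *)
Definition force_kind (q : force_type) := match q with Fp => LineK | Fc => PointK end.
Definition vel_kind (q : vel_type) := match q with Ec => PointK | Ep => LineK end.

Section Defs.
Variable R : realType.

Definition dot (u v : 'rV[R]_3) : R := \sum_(i < 3) u 0 i * v 0 i.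

Definition proj_eq (u v : 'rV[R]_3) : Prop := exists2 l : R, l != 0 & v = l *: u.

(* Image of an element of kind k under the duality of PG(2) given by D:
   points p |-> lines pD, lines l |-> points l D^{-T}. *)
Definition dual_img (D : 'M[R]_3) (k : elt_kind) (v : 'rV[R]_3) : 'rV[R]_3 :=
  match k with PointK => v *m D | LineK => v *m (invmx D)^T end.

(* The duality matrix D for which the action on elements of kind k is v |-> vA. *)
Definition duality_of_lin (A : 'M[R]_3) (k : elt_kind) : 'M[R]_3 :=
  match k with PointK => A | LineK => (invmx A)^T end.

Definition congr_sys (n : nat) (psi : 'I_n -> R) (f : 'I_n -> 'rV[R]_3) :=
  fun i => psi i *: f i.

(* A statics problem: n forces, m (sub)bodies; body b is acted on by the forces
   with indices in B b. *)
Definition equil (n m : nat) (B : 'I_m -> {set 'I_n}) (f : 'I_n -> 'rV[R]_3) : Prop :=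
  forall b, \sum_(i in B b) f i = 0.

Definition equil_pres_congr (n m : nat) (B : 'I_m -> {set 'I_n})
    (f : 'I_n -> 'rV[R]_3) (psi : 'I_n -> R) : Prop :=
  (forall i, psi i != 0) /\ (equil B (congr_sys psi f) <-> equil B f).

Definition proj_duality_statics (q : force_type) (n m : nat) (B : 'I_m -> {set 'I_n})
    (f g : 'I_n -> 'rV[R]_3) : Prop :=
  exists2 D : 'M[R]_3, D \in unitmx &
    (forall i, proj_eq (dual_img D (force_kind q) (f i)) (g i)) /\
    (equil B g <-> equil B f).

(* A kinematics problem: n bodies with velocities e, m compatibility conditions;
   condition t reads <c t, e (J t) - e (K t)> = 0, with c t a line (E_c case) or
   a point (E_p case). *)
Definition compat (n m : nat) (c : 'I_m -> 'rV[R]_3) (J K : 'I_m -> 'I_n)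
    (e : 'I_n -> 'rV[R]_3) : Prop :=
  forall t, dot (c t) (e (J t) - e (K t)) = 0.

Definition compat_pres_congr (n m : nat) (c : 'I_m -> 'rV[R]_3) (J K : 'I_m -> 'I_n)
    (e : 'I_n -> 'rV[R]_3) (psi : 'I_n -> R) : Prop :=
  (forall j, psi j != 0) /\ (compat c J K (congr_sys psi e) <-> compat c J K e).

Definition dual_constraints (q : vel_type) (m : nat) (D : 'M[R]_3)
    (c : 'I_m -> 'rV[R]_3) : 'I_m -> 'rV[R]_3 :=
  fun t => dual_img D (opp_kind (vel_kind q)) (c t).

Definition proj_duality_kin (q : vel_type) (n m : nat) (c : 'I_m -> 'rV[R]_3)
    (J K : 'I_m -> 'I_n) (e e' : 'I_n -> 'rV[R]_3) : Prop :=
  exists2 D : 'M[R]_3, D \in unitmx &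
    (forall j, proj_eq (dual_img D (vel_kind q) (e j)) (e' j)) /\
    (compat (dual_constraints q D c) J K e' <-> compat c J K e).

End Defs.

(* Main.v *)
Require Import Defs.
From HB Require Import structures.
From mathcomp Require Import all_boot all_order all_algebra.
From mathcomp Require Import reals.
Import Order.TTheory GRing.Theory Num.Theory.
Local Open Scope ring_scope.
From Stdlib Require Import FunctionalExtensionality.


Set Implicit Arguments. Unset Strict Implicit.
Section Aux.
Variable R : realType.

Definition lin_of (D : 'M[R]_3) (k : elt_kind) : 'M[R]_3 :=
  match k with PointK => D | LineK => (invmx D)^T end.

Lemma lin_of_unit D k : D \in unitmx -> lin_of D k \in unitmx.
Proof. by case: k => //= HD; rewrite unitmx_tr unitmx_inv. Qed.

Lemma dual_img_lin D k v : dual_img D k v = v *m lin_of D k.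
Proof. by case: k. Qed.

Lemma duality_of_lin_unit (A : 'M[R]_3) k : A \in unitmx -> duality_of_lin A k \in unitmx.
Proof. by case: k => //= HD; rewrite unitmx_tr unitmx_inv. Qed.

Lemma lin_of_duality (A : 'M[R]_3) k : lin_of (duality_of_lin A k) k = A.
Proof. by case: k => //=; rewrite trmx_inv trmxK invmxK. Qed.

Lemma duality_of_lin_of D k : duality_of_lin (lin_of D k) k = D.
Proof. by case: k => //=; rewrite trmx_inv trmxK invmxK. Qed.

Lemma dotE (u v : 'rV[R]_3) : dot u v = (u *m v^T) 0 0.
Proof. by rewrite /dot mxE; apply: eq_bigr => i _; rewrite mxE. Qed.

Lemma dot_inv (A : 'M[R]_3) u v : A \in unitmx ->
  dot (u *m (invmx A)^T) (v *m A) = dot u v.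
Proof.
move=> HA; rewrite !dotE trmx_mul -mulmxA [(invmx A)^T *m _]mulmxA.
by rewrite -trmx_mul mulmxV // trmx1 mul1mx.
Qed.

Lemma equil_lin n m (B : 'I_m -> {set 'I_n}) (A : 'M[R]_3) f :
  A \in unitmx -> equil B (fun i => f i *m A) <-> equil B f.
Proof.
move=> HA; split => H b.
  have := H b; rewrite -mulmx_suml => /(congr1 (mulmx^~ (invmx A))).
  by rewrite mulmxK // mul0mx.
by rewrite -mulmx_suml H mul0mx.
Qed.

Lemma compat_lin q n m (c : 'I_m -> 'rV[R]_3) (J K : 'I_m -> 'I_n) (A : 'M[R]_3) e :
  A \in unitmx ->
  compat (dual_constraints q (duality_of_lin A (vel_kind q)) c) J K
         (fun j => e j *m A) <-> compat c J K e.
Proof.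
move=> HA.
have E : forall t, dot (dual_constraints q (duality_of_lin A (vel_kind q)) c t)
                       (e (J t) *m A - e (K t) *m A) = dot (c t) (e (J t) - e (K t)).
  move=> t; rewrite -mulmxBl /dual_constraints.
  by case: q => /=; rewrite dot_inv.
by split => H t; have := H t; rewrite /= ?E => ->; rewrite ?E.
Qed.

Lemma choose_psi n (F G : 'I_n -> 'rV[R]_3) :
  (forall i, proj_eq (F i) (G i)) ->
  exists psi : 'I_n -> R, (forall i, psi i != 0) /\ G = congr_sys psi F.
Proof.
move=> H.
have [psi Hpsi] : exists psi : 'I_n -> R, forall i, psi i != 0 /\ G i = psi i *: F i.
  apply: (@fin_all_exists _ (fun=> R) (fun i l => l != 0 /\ G i = l *: F i)) => i; have [l Hl E] := H i; by exists l.
exists psi; split; first by move=> i; case: (Hpsi i).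
by apply: functional_extensionality => i; case: (Hpsi i).
Qed.

End Aux.
Unset Implicit Arguments.

Theorem theorem4 (R : realType) :
  (* (i) statics *)
  (forall (q : force_type) (n m : nat) (B : 'I_m -> {set 'I_n}),
     (forall (A : 'M[R]_3), A \in unitmx ->
        forall f : 'I_n -> 'rV[R]_3, equil B f -> equil B (fun i => f i *m A)) /\
     (forall f g : 'I_n -> 'rV[R]_3,
        proj_duality_statics q B f g <->
        exists2 A : 'M[R]_3, A \in unitmx &
          exists2 psi : 'I_n -> R,
            equil_pres_congr B (fun i => f i *m A) psi &
            g = congr_sys psi (fun i => f i *m A))) /\
  (* (ii) kinematics *)
  (forall (q : vel_type) (n m : nat) (c : 'I_m -> 'rV[R]_3) (J K : 'I_m -> 'I_n),
     (forall (A : 'M[R]_3), A \in unitmx ->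
        forall e : 'I_n -> 'rV[R]_3, compat c J K e ->
          compat (dual_constraints q (duality_of_lin A (vel_kind q)) c) J K
                 (fun j => e j *m A)) /\
     (forall e e' : 'I_n -> 'rV[R]_3,
        proj_duality_kin q c J K e e' <->
        exists2 A : 'M[R]_3, A \in unitmx &
          exists2 psi : 'I_n -> R,
            compat_pres_congr (dual_constraints q (duality_of_lin A (vel_kind q)) c)
                              J K (fun j => e j *m A) psi &
            e' = congr_sys psi (fun j => e j *m A))).
Proof.
split.
  move=> q n m B; split.
    by move=> A HA f Hf; apply/equil_lin.
  move=> f g; split.
    case=> D HD [Hp Heq].
    exists (lin_of D (force_kind q)); first exact: lin_of_unit.
    have [psi [Hpsi Eg]] := choose_psi (F := fun i => f i *m lin_of D (force_kind q)) (G := g)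
      (fun i => eq_ind _ (fun x => proj_eq x (g i)) (Hp i) _ (dual_img_lin _ _ _)).
    subst g; exists psi => //; split => //.
    have HL := equil_lin B f (lin_of_unit (force_kind q) HD); tauto.
  case=> A HA [psi [Hpsi Heq] ->].
  exists (duality_of_lin A (force_kind q)); first exact: duality_of_lin_unit.
  split.
    by move=> i; rewrite dual_img_lin lin_of_duality; exists (psi i).
  by rewrite Heq equil_lin.
move=> q n m c J K; split.
  by move=> A HA e He; apply/compat_lin.
move=> e e'; split.
  case=> D HD [Hp Heq].
  exists (lin_of D (vel_kind q)); first exact: lin_of_unit.
  have [psi [Hpsi Eg]] := choose_psi (F := fun i => e i *m lin_of D (vel_kind q)) (G := e')
    (fun i => eq_ind _ (fun x => proj_eq x (e' i)) (Hp i) _ (dual_img_lin _ _ _)).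
  subst e'; exists psi => //; split => //.
  rewrite compat_lin ?lin_of_unit //.
  by rewrite duality_of_lin_of -Heq.
case=> A HA [psi [Hpsi Heq] ->].
exists (duality_of_lin A (vel_kind q)); first exact: duality_of_lin_unit.
split.
  by move=> i; rewrite dual_img_lin lin_of_duality; exists (psi i).
by rewrite Heq compat_lin.
Qed.
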